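(* Let $\Lambda$ be a row-finite $2$-graph with no sources. Suppose that every vertex of $\Lambda$ has an aperiodic quartet (an $(a,b)$-aperiodic quartet for some positive integers $a,b$). Then $\Lambda$ is strongly aperiodic.
   Context: A $k$-graph is a countable category $\Lambda$ with a functor $d:\Lambda\to\mathbb{N}^k$ satisfying the factorization property: whenever $d(\lambda)=m+n$ there are unique $\mu,\nu$ with $\lambda=\mu\nu$, $d(\mu)=m$, $d(\nu)=n$. $\Lambda^n=d^{-1}(n)$, $\Lambda^0$ the vertices, $r,s$ range and source, $v\Lambda^n w=\{\lambda:r(\lambda)=v,d(\lambda)=n,s(\lambda)=w\}$. Row-finite: each $v\Lambda^n$ finite; no sources: $v\Lambda^{e_i}\ne\emptyset$ for all $v,i$. For $0\le m\le n\le d(\lambda)$, $\lambda(m,n)$ is the unique path with $\lambda=\lambda'\lambda(m,n)\lambda''$, $d(\lambda')=m$, $d(\lambda(m,n))=n-m$. No local periodicity at $v$: for each $m\neq n\in\mathbb{N}^k$ there is $\lambda$ with $r(\lambda)=v$, $d(\lambda)\ge m\vee n$ and $\lambda(m,m+d(\lambda)-(m\vee n))\neq\lambda(n,n+d(\lambda)-(m\vee n))$; aperiodic: no local periodicity at every vertex. Write $v\le w$ iff there is a path with range $v$ and source $w$. $H\subseteq\Lambda^0$ is hereditary if $v\in H$, $v\le w$ imply $w\in H$; saturated if for every $v$: $r^{-1}(v)\ne\emptyset$ and $\{s(\lambda):\lambda\in v\Lambda^{e_i}\}\subseteq H$ for some $i$ imply $v\in H$. For saturated hereditary $H\subsetneq\Lambda^0$,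 $\Gamma(\Lambda\setminus H)$ is the $k$-graph with vertices $\Lambda^0\setminus H$ and morphisms $\{\lambda:s(\lambda)\notin H\}$ (a row-finite $k$-graph with no sources). $\Lambda$ is strongly aperiodic if $\Gamma(\Lambda\setminus H)$ is aperiodic for all saturated hereditary $H\subsetneq\Lambda^0$. An $(a,b)$-aperiodic quartet at $u$ is $(\alpha_1,\alpha_2,\beta_1,\beta_2)$ with $\alpha_1\neq\alpha_2\in u\Lambda^{ae_1}u$, $\beta_1\neq\beta_2\in u\Lambda^{be_2}u$, $\beta_2\alpha_1=\alpha_1\beta_2$, $\beta_2\alpha_2=\alpha_2\beta_2$, $\beta_1\alpha_1=\alpha_2\beta_1$, $\beta_1\alpha_2=\alpha_1\beta_1$. *)

(* Defs.v *)
From Stdlib Require Import Arith Lia List ClassicalDescription ProofIrrelevance.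

Definition deg := (nat * nat)%type.
Definition dadd (m n : deg) : deg := (fst m + fst n, snd m + snd n).
Definition dsub (m n : deg) : deg := (fst m - fst n, snd m - snd n).
Definition djoin (m n : deg) : deg := (Nat.max (fst m) (fst n), Nat.max (snd m) (snd n)).
Definition dle (m n : deg) : Prop := fst m <= fst n /\ snd m <= snd n.
Definition e1 : deg := (1, 0).
Definition e2 : deg := (0, 1).

(* A 2-graph: a countable category (objects Obj, morphisms Mor, range rg,
   source sc, identities idm, composition comp (only meaningful on composable
   pairs, i.e. sc f = rg g; comp f g is "f g" with f on the left)) with a
   degree functor dg : Mor -> N^2 satisfying the factorization property. *)
Record twograph := {
  Obj : Type;
  Mor : Type;
  rg : Mor -> Obj;
  sc : Mor -> Obj;
  idm : Obj -> Mor;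
  comp : Mor -> Mor -> Mor;
  dg : Mor -> deg;
  Mor_countable : exists f : Mor -> nat, forall x y, f x = f y -> x = y;
  rg_id : forall v, rg (idm v) = v;
  sc_id : forall v, sc (idm v) = v;
  rg_comp : forall f g, sc f = rg g -> rg (comp f g) = rg f;
  sc_comp : forall f g, sc f = rg g -> sc (comp f g) = sc g;
  comp_id_l : forall f, comp (idm (rg f)) f = f;
  comp_id_r : forall f, comp f (idm (sc f)) = f;
  comp_assoc : forall f g h, sc f = rg g -> sc g = rg h ->
      comp (comp f g) h = comp f (comp g h);
  dg_id : forall v, dg (idm v) = (0, 0);
  dg_comp : forall f g, sc f = rg g -> dg (comp f g) = dadd (dg f) (dg g);
  factorization : forall l m n, dg l = dadd m n ->
      exists mu nu, (sc mu = rg nu /\ comp mu nu = l /\ dg mu = m /\ dg nu = n) /\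
        forall mu' nu', sc mu' = rg nu' -> comp mu' nu' = l -> dg mu' = m -> dg nu' = n ->
          mu' = mu /\ nu' = nu
}.

Arguments rg {_} _.
Arguments sc {_} _.
Arguments idm {_} _.
Arguments comp {_} _ _.
Arguments dg {_} _.

Section Defs.
Variable G : twograph.

Definition row_finite : Prop :=
  forall (v : Obj G) (n : deg), exists l : list (Mor G),
    forall lam, rg lam = v -> dg lam = n -> In lam l.

Definition no_sources : Prop :=
  forall v : Obj G,
    (exists lam : Mor G, rg lam = v /\ dg lam = e1) /\
    (exists lam : Mor G, rg lam = v /\ dg lam = e2).

(* mu = lam(m,n): lam = lam' mu lam'' with d(lam') = m, d(mu) = n - m *)
Definition segment (lam : Mor G) (m n : deg) (mu : Mor G) : Prop :=
  exists l1 l2 : Mor G, sc l1 = rg mu /\ sc mu = rg l2 /\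
    comp (comp l1 mu) l2 = lam /\ dg l1 = m /\ dg mu = dsub n m.

Definition no_local_periodicity (v : Obj G) : Prop :=
  forall m n : deg, m <> n ->
    exists lam : Mor G, rg lam = v /\ dle (djoin m n) (dg lam) /\
      forall mu1 mu2,
        segment lam m (dadd m (dsub (dg lam) (djoin m n))) mu1 ->
        segment lam n (dadd n (dsub (dg lam) (djoin m n))) mu2 ->
        mu1 <> mu2.

Definition aperiodic : Prop := forall v : Obj G, no_local_periodicity v.

Definition vle (v w : Obj G) : Prop := exists lam : Mor G, rg lam = v /\ sc lam = w.

Definition hereditary (H : Obj G -> Prop) : Prop :=
  forall v w, H v -> vle v w -> H w.

Definition saturated (H : Obj G -> Prop) : Prop :=
  forall v : Obj G,
    (exists lam : Mor G, rg lam = v) ->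
    ((forall lam : Mor G, rg lam = v -> dg lam = e1 -> H (sc lam)) \/
     (forall lam : Mor G, rg lam = v -> dg lam = e2 -> H (sc lam))) ->
    H v.

Definition aperiodic_quartet (a b : nat) (u : Obj G) (al1 al2 be1 be2 : Mor G) : Prop :=
  al1 <> al2 /\ be1 <> be2 /\
  rg al1 = u /\ sc al1 = u /\ dg al1 = (a, 0) /\
  rg al2 = u /\ sc al2 = u /\ dg al2 = (a, 0) /\
  rg be1 = u /\ sc be1 = u /\ dg be1 = (0, b) /\
  rg be2 = u /\ sc be2 = u /\ dg be2 = (0, b) /\
  comp be2 al1 = comp al1 be2 /\ comp be2 al2 = comp al2 be2 /\
  comp be1 al1 = comp al2 be1 /\ comp be1 al2 = comp al1 be1.

Definition has_aperiodic_quartet (u : Obj G) : Prop :=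
  exists a b : nat, 0 < a /\ 0 < b /\
    exists al1 al2 be1 be2, aperiodic_quartet a b u al1 al2 be1 be2.

End Defs.

Arguments row_finite : clear implicits.
Arguments no_sources : clear implicits.
Arguments aperiodic : clear implicits.

Lemma sig_ext {A : Type} {P : A -> Prop} (x y : sig P) :
  proj1_sig x = proj1_sig y -> x = y.
Proof.
  destruct x as [x px], y as [y py]; simpl; intros ->.
  f_equal; apply proof_irrelevance.
Qed.

Section Gamma.
Variable G : twograph.
Variable H : Obj G -> Prop.
Hypothesis hH : hereditary G H.

Lemma rg_notH (lam : Mor G) : ~ H (sc lam) -> ~ H (rg lam).
Proof. intros h1 h2; apply h1; apply (hH (rg lam)); [exact h2| exists lam; auto]. Qed.

Definition GObj := {v : Obj G | ~ H v}.
Definition GMor := {lam : Mor G | ~ H (sc lam)}.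

Definition Grg (f : GMor) : GObj := exist _ (rg (proj1_sig f)) (rg_notH _ (proj2_sig f)).
Definition Gsc (f : GMor) : GObj := exist _ (sc (proj1_sig f)) (proj2_sig f).

Lemma Gidm_pf (v : GObj) : ~ H (sc (idm (proj1_sig v))).
Proof. rewrite sc_id; exact (proj2_sig v). Qed.
Definition Gidm (v : GObj) : GMor := exist _ (idm (proj1_sig v)) (Gidm_pf v).

Lemma Gcomp_pf (f g : GMor) (e : sc (proj1_sig f) = rg (proj1_sig g)) :
  ~ H (sc (comp (proj1_sig f) (proj1_sig g))).
Proof. rewrite sc_comp by exact e; exact (proj2_sig g). Qed.

Definition Gcomp (f g : GMor) : GMor :=
  match excluded_middle_informative (sc (proj1_sig f) = rg (proj1_sig g)) with
  | left e => exist _ (comp (proj1_sig f) (proj1_sig g)) (Gcomp_pf f g e)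
  | right _ => f
  end.

Definition Gdg (f : GMor) : deg := dg (proj1_sig f).

Lemma Gcomp_val (f g : GMor) : sc (proj1_sig f) = rg (proj1_sig g) ->
  proj1_sig (Gcomp f g) = comp (proj1_sig f) (proj1_sig g).
Proof.
  intro e; unfold Gcomp; destruct (excluded_middle_informative _); [reflexivity|contradiction].
Qed.

Lemma Gsc_rg (f g : GMor) : Gsc f = Grg g -> sc (proj1_sig f) = rg (proj1_sig g).
Proof. intro e; exact (f_equal (@proj1_sig _ _) e). Qed.

Lemma Gcountable : exists f : GMor -> nat, forall x y, f x = f y -> x = y.
Proof.
  destruct (Mor_countable G) as [f hf].
  exists (fun x => f (proj1_sig x)); intros x y e; apply sig_ext, hf, e.
Qed.

Lemma Grg_id v : Grg (Gidm v) = v.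
Proof. apply sig_ext; simpl; apply rg_id. Qed.
Lemma Gsc_id v : Gsc (Gidm v) = v.
Proof. apply sig_ext; simpl; apply sc_id. Qed.
Lemma Grg_comp f g : Gsc f = Grg g -> Grg (Gcomp f g) = Grg f.
Proof.
  intro e; apply Gsc_rg in e; apply sig_ext; simpl; rewrite Gcomp_val by exact e.
  apply rg_comp, e.
Qed.
Lemma Gsc_comp f g : Gsc f = Grg g -> Gsc (Gcomp f g) = Gsc g.
Proof.
  intro e; apply Gsc_rg in e; apply sig_ext; simpl; rewrite Gcomp_val by exact e.
  apply sc_comp, e.
Qed.
Lemma Gcomp_id_l f : Gcomp (Gidm (Grg f)) f = f.
Proof.
  apply sig_ext; rewrite Gcomp_val; simpl; [apply comp_id_l | apply sc_id].
Qed.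
Lemma Gcomp_id_r f : Gcomp f (Gidm (Gsc f)) = f.
Proof.
  apply sig_ext; rewrite Gcomp_val; simpl; [apply comp_id_r | now rewrite rg_id].
Qed.
Lemma Gcomp_assoc f g h : Gsc f = Grg g -> Gsc g = Grg h ->
  Gcomp (Gcomp f g) h = Gcomp f (Gcomp g h).
Proof.
  intros e1' e2'; apply Gsc_rg in e1'; apply Gsc_rg in e2'.
  apply sig_ext.
  rewrite (Gcomp_val (Gcomp f g) h); [| rewrite Gcomp_val by exact e1'; now rewrite sc_comp].
  rewrite (Gcomp_val f (Gcomp g h)); [| rewrite Gcomp_val by exact e2'; now rewrite rg_comp].
  rewrite !Gcomp_val by assumption. apply comp_assoc; assumption.
Qed.
Lemma Gdg_id v : Gdg (Gidm v) = (0, 0).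
Proof. apply dg_id. Qed.
Lemma Gdg_comp f g : Gsc f = Grg g -> Gdg (Gcomp f g) = dadd (Gdg f) (Gdg g).
Proof.
  intro e; apply Gsc_rg in e; unfold Gdg; rewrite Gcomp_val by exact e; apply dg_comp, e.
Qed.

Lemma Gfactorization : forall l m n, Gdg l = dadd m n ->
  exists mu nu, (Gsc mu = Grg nu /\ Gcomp mu nu = l /\ Gdg mu = m /\ Gdg nu = n) /\
    forall mu' nu', Gsc mu' = Grg nu' -> Gcomp mu' nu' = l -> Gdg mu' = m -> Gdg nu' = n ->
      mu' = mu /\ nu' = nu.
Proof.
  intros [l pl] m n e; unfold Gdg in e; simpl in e.
  destruct (factorization G l m n e) as [mu [nu [[h1 [h2 [h3 h4]]] hu]]].
  assert (pnu : ~ H (sc nu)) by (rewrite <- h2 in pl; rewrite sc_comp in pl; auto).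
  assert (pmu : ~ H (sc mu)) by (rewrite h1; apply rg_notH; exact pnu).
  exists (exist _ mu pmu), (exist _ nu pnu); split.
  - repeat split; try assumption.
    + apply sig_ext; exact h1.
    + apply sig_ext; rewrite Gcomp_val by exact h1; exact h2.
  - intros mu' nu' f1 f2 f3 f4.
    pose proof (Gsc_rg _ _ f1) as f1'.
    assert (f2' : comp (proj1_sig mu') (proj1_sig nu') = l)
      by (rewrite <- Gcomp_val by exact f1'; rewrite f2; reflexivity).
    destruct (hu _ _ f1' f2' f3 f4) as [u1 u2]; split; apply sig_ext; assumption.
Qed.

Definition Gamma : twograph :=
  {| Obj := GObj; Mor := GMor; rg := Grg; sc := Gsc; idm := Gidm; comp := Gcomp; dg := Gdg;
     Mor_countable := Gcountable; rg_id := Grg_id; sc_id := Gsc_id;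
     rg_comp := Grg_comp; sc_comp := Gsc_comp; comp_id_l := Gcomp_id_l;
     comp_id_r := Gcomp_id_r; comp_assoc := Gcomp_assoc; dg_id := Gdg_id;
     dg_comp := Gdg_comp; factorization := Gfactorization |}.

End Gamma.

Definition strongly_aperiodic (G : twograph) : Prop :=
  forall (H : Obj G -> Prop) (hH : hereditary G H),
    saturated G H -> (exists v, ~ H v) -> aperiodic (Gamma G H hH).

(* Main.v *)
Require Import Defs.
From Stdlib Require Import Arith Lia List Classical ProofIrrelevance.

Ltac dsolve := repeat match goal with x : deg |- _ => destruct x end;
  unfold dle, dadd, dsub, djoin in *; simpl in *; try split; try f_equal; lia.

Section Seg.
Variable G : twograph.

Definition sg (lam : Mor G) (c s : deg) (mu : Mor G) : Prop :=
  exists l1 l2 : Mor G, sc l1 = rg mu /\ sc mu = rg l2 /\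
    comp (comp l1 mu) l2 = lam /\ dg l1 = c /\ dg mu = s.

Lemma dadd_cancel_l (c x y : deg) : dadd c x = dadd c y -> x = y.
Proof.
  destruct c, x, y; unfold dadd; simpl; intro h; injection h; intros; f_equal; lia.
Qed.

Lemma sg_dg lam c s mu : sg lam c s mu -> dg mu = s.
Proof. intros (l1 & l2 & _ & _ & _ & _ & h); exact h. Qed.

Lemma sg_uniq lam c s mu1 mu2 : sg lam c s mu1 -> sg lam c s mu2 -> mu1 = mu2.
Proof.
  intros (l1 & l2 & a1 & a2 & a3 & a4 & a5) (k1 & k2 & b1 & b2 & b3 & b4 & b5).
  assert (d1 : dg (comp l1 mu1) = dadd c s) by (rewrite dg_comp by auto; congruence).
  assert (d2 : dg (comp k1 mu2) = dadd c s) by (rewrite dg_comp by auto; congruence).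
  assert (s1 : sc (comp l1 mu1) = rg l2) by (rewrite sc_comp; auto).
  assert (s2 : sc (comp k1 mu2) = rg k2) by (rewrite sc_comp; auto).
  assert (dl : dg lam = dadd (dadd c s) (dg l2)).
  { rewrite <- a3, dg_comp by exact s1. rewrite d1. reflexivity. }
  assert (dk : dg k2 = dg l2).
  { apply (dadd_cancel_l (dadd c s)). rewrite <- dl, <- b3, dg_comp by exact s2.
    rewrite d2. reflexivity. }
  destruct (factorization G lam _ _ dl) as (x & y & _ & u).
  destruct (u _ _ s1 a3 d1 eq_refl) as [e1' _].
  destruct (u _ _ s2 b3 d2 dk) as [e2' _].
  assert (e : comp l1 mu1 = comp k1 mu2) by congruence.
  destruct (factorization G _ _ _ d1) as (x' & y' & _ & u').
  destruct (u' _ _ a1 eq_refl a4 a5) as [_ f1].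
  destruct (u' _ _ b1 (eq_sym e) b4 b5) as [_ f2].
  congruence.
Qed.

Lemma sg_exists lam c s : dle (dadd c s) (dg lam) -> exists mu, sg lam c s mu.
Proof.
  intro h.
  assert (e : dg lam = dadd (dadd c s) (dsub (dg lam) (dadd c s))).
  { revert h; generalize (dg lam); intros; dsolve. }
  destruct (factorization G lam _ _ e) as (x & y & (h1 & h2 & h3 & h4) & _).
  destruct (factorization G x c s h3) as (l1 & mu & (k1 & k2 & k3 & k4) & _).
  exists mu, l1, y. repeat split; auto.
  - rewrite <- h1, <- k2, sc_comp; auto.
  - rewrite k2. exact h2.
Qed.

Lemma sg_sub lam c s mu c' s' nu :
  sg lam c s mu -> sg mu c' s' nu -> sg lam (dadd c c') s' nu.
Proof.
  intros (l1 & l2 & a1 & a2 & a3 & a4 & a5) (k1 & k2 & b1 & b2 & b3 & b4 & b5).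
  subst lam mu.
  assert (q1 : sc (comp k1 nu) = rg k2) by (rewrite sc_comp; auto).
  rewrite rg_comp, rg_comp in a1 by auto.
  rewrite sc_comp in a2 by auto.
  exists (comp l1 k1), (comp k2 l2).
  split; [rewrite sc_comp; auto|].
  split; [rewrite rg_comp; auto|].
  split.
  - assert (q2 : sc l1 = rg (comp k1 nu)) by (rewrite rg_comp; auto).
    rewrite <- (comp_assoc G l1 (comp k1 nu) k2) by auto.
    rewrite <- (comp_assoc G l1 k1 nu) by auto.
    rewrite (comp_assoc G (comp (comp l1 k1) nu) k2 l2); auto.
    all: try (rewrite sc_comp; auto).
    all: try (rewrite sc_comp; auto).
  - split; auto. rewrite dg_comp by auto. congruence.
Qed.

Lemma sg_l x y c s nu : sg x c s nu -> sc x = rg y -> sg (comp x y) c s nu.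
Proof.
  intros (l1 & l2 & a1 & a2 & a3 & a4 & a5) h. subst x.
  rewrite sc_comp in h by (rewrite sc_comp; auto).
  exists l1, (comp l2 y). split; auto. split; [rewrite rg_comp; auto|].
  split; auto.
  symmetry; apply comp_assoc; auto. rewrite sc_comp; auto.
Qed.

Lemma sg_full x : sg x (0,0) (dg x) x.
Proof.
  exists (idm (rg x)), (idm (sc x)). rewrite sc_id, rg_id, comp_id_l, comp_id_r.
  repeat split; auto. apply dg_id.
Qed.

Lemma sg_r0 x y : sc x = rg y -> sg (comp x y) (dg x) (dg y) y.
Proof.
  intro h. exists x, (idm (sc y)). rewrite rg_id. repeat split; auto.
  assert (E := comp_id_r G (comp x y)). rewrite sc_comp in E by auto. exact E.
Qed.

Lemma sg_r x y c s nu : sc x = rg y -> sg y c s nu -> sg (comp x y) (dadd (dg x) c) s nu.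
Proof. intros h1 h2. exact (sg_sub _ _ _ _ _ _ _ (sg_r0 x y h1) h2). Qed.


Section Loops.
Variable v : Obj G.

Definition loop (x : Mor G) := rg x = v /\ sc x = v.

Fixpoint pw (x : Mor G) (k : nat) : Mor G :=
  match k with 0 => idm v | S k => comp x (pw x k) end.

Lemma pw_S x k : pw x (S k) = comp x (pw x k).
Proof. reflexivity. Qed.

Lemma loop_comp x y : loop x -> loop y -> loop (comp x y).
Proof.
  intros [h1 h2] [h3 h4]. split.
  - rewrite rg_comp; congruence.
  - rewrite sc_comp; congruence.
Qed.

Lemma loop_pw x k : loop x -> loop (pw x k).
Proof.
  intro h; induction k; simpl.
  - split; [apply rg_id | apply sc_id].
  - apply loop_comp; auto.
Qed.

Lemma cv x y : loop x -> loop y -> sc x = rg y.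
Proof. intros [_ h1] [h2 _]; congruence. Qed.

Lemma dg_pw x k p q : loop x -> dg x = (p,q) -> dg (pw x k) = (k*p, k*q).
Proof.
  intros h hd; induction k; simpl.
  - apply dg_id.
  - rewrite dg_comp by (apply cv; auto; apply loop_pw; auto).
    rewrite IHk, hd. reflexivity.
Qed.

Lemma assocv x y z : loop x -> loop y -> loop z -> comp (comp x y) z = comp x (comp y z).
Proof. intros; apply comp_assoc; apply cv; auto. Qed.

Lemma idl x : loop x -> comp (idm v) x = x.
Proof. intros [h1 h2]. rewrite <- h1. apply comp_id_l. Qed.

Lemma idr x : loop x -> comp x (idm v) = x.
Proof. intros [h1 h2]. rewrite <- h2. apply comp_id_r. Qed.

Lemma pw_add x i j : loop x -> pw x (i + j) = comp (pw x i) (pw x j).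
Proof.
  intro h; induction i; simpl.
  - rewrite idl; auto. apply loop_pw; auto.
  - rewrite IHi, assocv; auto; apply loop_pw; auto.
Qed.

Lemma pw_seg x k p q i : loop x -> dg x = (p,q) -> i < k ->
  sg (pw x k) (i*p, i*q) (p,q) x.
Proof.
  intros h hd hi.
  replace k with (i + S (k - i - 1)) by lia.
  rewrite pw_add by auto. rewrite pw_S.
  replace (i*p, i*q) with (dadd (dg (pw x i)) (0,0))
    by (rewrite (dg_pw x i p q h hd); unfold dadd; simpl; f_equal; lia).
  apply sg_r.
  - apply cv; [apply loop_pw; auto | apply loop_comp; auto; apply loop_pw; auto].
  - rewrite <- hd. apply sg_l; [apply sg_full | apply cv; auto; apply loop_pw; auto].
Qed.

Lemma tw1 x y p q d1 d2 i : loop x -> loop y -> dg x = (d1,d2) -> i < p ->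
  sg (comp (pw x p) (pw y q)) (i*d1, i*d2) (d1,d2) x.
Proof.
  intros hx hy hd hi. apply sg_l. apply pw_seg; auto.
  apply cv; apply loop_pw; auto.
Qed.

Lemma tw2 x y p q d1 d2 i : loop x -> loop y -> dg x = (d1,d2) -> dg y = (d1,d2) ->
  p <= i -> i < p + q ->
  sg (comp (pw x p) (pw y q)) (i*d1, i*d2) (d1,d2) y.
Proof.
  intros hx hy hd hd' hi1 hi2.
  replace (i*d1, i*d2) with (dadd (dg (pw x p)) ((i-p)*d1, (i-p)*d2)).
  - apply sg_r. apply cv; apply loop_pw; auto. apply pw_seg; auto. lia.
  - rewrite (dg_pw x p d1 d2 hx hd). unfold dadd; simpl.
    replace i with (p + (i - p)) at 3 4 by lia.
    rewrite !Nat.mul_add_distr_r. reflexivity.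
Qed.

Definition cm (x y : Mor G) := comp x y = comp y x.

Lemma cm_sym x y : cm x y -> cm y x.
Proof. unfold cm; auto. Qed.

Lemma cm_comp x y z : loop x -> loop y -> loop z -> cm x y -> cm x z -> cm x (comp y z).
Proof.
  unfold cm; intros hx hy hz e1' e2'.
  rewrite <- assocv, e1', assocv, e2', assocv; auto.
Qed.

Lemma cm_pw x y k : loop x -> loop y -> cm x y -> cm x (pw y k).
Proof.
  intros hx hy e; induction k; simpl.
  - unfold cm. rewrite idl, idr; auto.
  - apply cm_comp; auto. apply loop_pw; auto.
Qed.


Section Quartet.
Variables (a b : nat) (al1 al2 be1 be2 : Mor G).
Hypotheses (ha : 0 < a) (hb : 0 < b) (la1 : loop al1) (la2 : loop al2)
  (lb1 : loop be1) (lb2 : loop be2)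
  (da1 : dg al1 = (a,0)) (da2 : dg al2 = (a,0)) (db1 : dg be1 = (0,b)) (db2 : dg be2 = (0,b))
  (n12 : al1 <> al2) (nb12 : be1 <> be2)
  (c21 : comp be2 al1 = comp al1 be2) (c22 : comp be2 al2 = comp al2 be2).

Lemma row_lemma N A x Y s w : loop A -> cm be2 A -> Y <= N ->
  sg A (x, 0) s w -> sg (comp (pw be2 N) A) (x, Y*b) s w.
Proof.
  intros hA hc hY hs.
  replace N with (Y + (N - Y)) by lia.
  rewrite pw_add, assocv by (auto; apply loop_pw; auto).
  assert (cmA : cm (pw be2 (N - Y)) A).
  { apply cm_sym, cm_pw; auto. apply cm_sym; auto. }
  rewrite cmA.
  replace (x, Y*b) with (dadd (dg (pw be2 Y)) (x, 0))
    by (rewrite (dg_pw be2 Y 0 b lb2 db2); unfold dadd; simpl; f_equal; lia).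
  apply sg_r.
  - apply cv; [apply loop_pw; auto | apply loop_comp; auto; apply loop_pw; auto].
  - apply sg_l; auto. apply cv; auto. apply loop_pw; auto.
Qed.

Lemma caseA l1 l2 h1 h2 M1 M2 : l1 < h1 -> h1 <= M1 -> l2 <= M2 -> h2 <= M2 ->
  (forall lam s nu nu', rg lam = v -> dle (dadd (a*b*M1, a*b*M2) s) (dg lam) ->
     sg lam (a*b*l1, a*b*l2) s nu -> sg lam (a*b*h1, a*b*h2) s nu' -> nu = nu') -> False.
Proof.
  intros hl hh hl2 hh2 HC.
  set (p := b*l1 + 1). set (q := b*M1 - b*l1).
  set (A := comp (pw al1 p) (pw al2 q)).
  assert (lA : loop A) by (apply loop_comp; apply loop_pw; auto).
  assert (cA : cm be2 A).
  { apply cm_comp; try apply loop_pw; auto; apply cm_pw; auto. }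
  set (lam := comp (pw be2 (a*M2)) A).
  apply n12. apply (HC lam (a,0)).
  - unfold lam. rewrite rg_comp. apply loop_pw; auto. apply cv; auto. apply loop_pw; auto.
  - unfold lam, A. rewrite !dg_comp; try (apply cv; auto; try apply loop_comp; apply loop_pw; auto).
    rewrite (dg_pw be2 _ 0 b), (dg_pw al1 _ a 0), (dg_pw al2 _ a 0); auto.
    unfold dle, dadd, p, q; simpl.
    assert (b*l1 <= b*M1) by (apply Nat.mul_le_mono_l; lia).
    split; nia.
  - replace (a*b*l1, a*b*l2) with (b*l1*a, (a*l2)*b) by (f_equal; ring).
    apply row_lemma; auto. nia.
    replace (b*l1*a, 0) with (b*l1*a, b*l1*0) by (f_equal; ring).
    apply tw1; auto. unfold p; lia.
  - replace (a*b*h1, a*b*h2) with (b*h1*a, (a*h2)*b) by (f_equal; ring).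
    apply row_lemma; auto. nia.
    replace (b*h1*a, 0) with (b*h1*a, b*h1*0) by (f_equal; ring).
    apply tw2; auto; unfold p, q.
    + nia.
    + assert (b*l1 <= b*M1) by (apply Nat.mul_le_mono_l; lia).
      assert (b*h1 <= b*M1) by (apply Nat.mul_le_mono_l; lia). lia.
Qed.

Lemma caseB c1 l2 h2 M2 : l2 < h2 -> h2 <= M2 ->
  (forall lam s nu nu', rg lam = v -> dle (dadd (a*b*c1, a*b*M2) s) (dg lam) ->
     sg lam (a*b*c1, a*b*l2) s nu -> sg lam (a*b*c1, a*b*h2) s nu' -> nu = nu') -> False.
Proof.
  intros hl hh HC.
  set (p := a*l2 + 1). set (q := a*M2 - a*l2).
  set (B := comp (pw be1 p) (pw be2 q)).
  assert (lB : loop B) by (apply loop_comp; apply loop_pw; auto).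
  set (lam := comp (pw al1 (b*c1)) B).
  assert (sc0 : sc (pw al1 (b*c1)) = rg B) by (apply cv; auto; apply loop_pw; auto).
  assert (dd : dg (pw al1 (b*c1)) = (b*c1*a, b*c1*0)) by (apply dg_pw; auto).
  apply nb12. apply (HC lam (0,b)).
  - unfold lam. rewrite rg_comp by auto. apply loop_pw; auto.
  - unfold lam, B. rewrite !dg_comp; try (apply cv; auto; try apply loop_comp; apply loop_pw; auto).
    rewrite (dg_pw be2 _ 0 b), (dg_pw al1 _ a 0), (dg_pw be1 _ 0 b); auto.
    unfold dle, dadd, p, q; simpl.
    assert (a*l2 <= a*M2) by (apply Nat.mul_le_mono_l; lia).
    split; nia.
  - replace (a*b*c1, a*b*l2) with (dadd (dg (pw al1 (b*c1))) ((a*l2)*0, (a*l2)*b))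
      by (rewrite dd; unfold dadd; simpl; f_equal; ring).
    apply sg_r; auto. apply tw1; auto. unfold p; lia.
  - replace (a*b*c1, a*b*h2) with (dadd (dg (pw al1 (b*c1))) ((a*h2)*0, (a*h2)*b))
      by (rewrite dd; unfold dadd; simpl; f_equal; ring).
    apply sg_r; auto. apply tw2; auto; unfold p, q.
    + nia.
    + assert (a*l2 <= a*M2) by (apply Nat.mul_le_mono_l; lia).
      assert (a*h2 <= a*M2) by (apply Nat.mul_le_mono_l; lia). lia.
Qed.

End Quartet.
End Loops.

Lemma main_local (v : Obj G) : has_aperiodic_quartet G v -> no_local_periodicity G v.
Proof.
  intros (a & b & ha & hb & al1 & al2 & be1 & be2 & Q).
  destruct Q as (n12 & nb12 & ra1 & sa1 & da1 & ra2 & sa2 & da2 & rb1 & sb1 & db1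
                 & rb2 & sb2 & db2 & c21 & c22 & c11 & c12).
  intros [m1 m2] [n1 n2] hmn.
  apply NNPP; intro Hn.
  assert (H0 : forall lam, rg lam = v -> dle (djoin (m1,m2) (n1,n2)) (dg lam) ->
     forall nu1 nu2, sg lam (m1,m2) (dsub (dg lam) (djoin (m1,m2) (n1,n2))) nu1 ->
       sg lam (n1,n2) (dsub (dg lam) (djoin (m1,m2) (n1,n2))) nu2 -> nu1 = nu2).
  { intros lam hr hle nu1 nu2 s1 s2. apply NNPP; intro hne. apply Hn.
    exists lam. split; [exact hr|]. split; [exact hle|].
    intros mu1 mu2 t1 t2 e. unfold segment in t1, t2.
    assert (E : forall x k : deg, dsub (dadd x k) x = k) by (intros; dsolve).
    rewrite E in t1, t2. apply hne.
    rewrite <- (sg_uniq _ _ _ _ _ t1 s1), <- (sg_uniq _ _ _ _ _ t2 s2). exact e. }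
  set (M1 := Nat.max m1 n1). set (M2 := Nat.max m2 n2).
  assert (HS : forall lam s t nu1 nu2, rg lam = v ->
     dle (dadd (dadd (M1,M2) t) s) (dg lam) ->
     sg lam (dadd (m1,m2) t) s nu1 -> sg lam (dadd (n1,n2) t) s nu2 -> nu1 = nu2).
  { intros lam s t nu1 nu2 hr hd s1 s2.
    assert (hle : dle (djoin (m1,m2) (n1,n2)) (dg lam))
      by (revert hd; generalize (dg lam); unfold M1, M2; intros; dsolve).
    set (k := dsub (dg lam) (djoin (m1,m2) (n1,n2))).
    destruct (sg_exists lam (m1,m2) k) as [mu1 q1].
    { unfold k. revert hle; generalize (dg lam); intros; dsolve. }
    destruct (sg_exists lam (n1,n2) k) as [mu2 q2].
    { unfold k. revert hle; generalize (dg lam); intros; dsolve. }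
    pose proof (H0 lam hr hle mu1 mu2 q1 q2) as e. subst mu2.
    destruct (sg_exists mu1 t s) as [rho r1].
    { rewrite (sg_dg _ _ _ _ q1). unfold k. revert hd; generalize (dg lam);
      unfold M1, M2; intros; dsolve. }
    pose proof (sg_sub _ _ _ _ _ _ _ q1 r1) as w1.
    pose proof (sg_sub _ _ _ _ _ _ _ q2 r1) as w2.
    rewrite (sg_uniq _ _ _ _ _ s1 w1), (sg_uniq _ _ _ _ _ s2 w2). reflexivity. }
  set (J := a*b).
  assert (HCh : forall lam s, rg lam = v -> dle (dadd (J*M1, J*M2) s) (dg lam) ->
     forall i r nu nu', i + r = J ->
       sg lam (i*m1 + r*n1, i*m2 + r*n2) s nu ->
       sg lam (0*m1 + J*n1, 0*m2 + J*n2) s nu' -> nu = nu').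
  { intros lam s hr hd i. induction i as [|i IH]; intros r nu nu' hir s1 s2.
    - simpl in hir. subst r. exact (sg_uniq _ _ _ _ _ s1 s2).
    - assert (A1 : forall x y, i*x + r*y <= (i+r)*Nat.max x y).
      { intros. rewrite Nat.mul_add_distr_r.
        assert (i*x <= i*Nat.max x y) by (apply Nat.mul_le_mono_l; lia).
        assert (r*y <= r*Nat.max x y) by (apply Nat.mul_le_mono_l; lia). lia. }
      assert (A2 : forall x y, J * Nat.max x y = Nat.max x y + (i+r)*Nat.max x y)
        by (intros; rewrite <- hir; reflexivity).
      pose proof (A1 m1 n1). pose proof (A1 m2 n2). pose proof (A2 m1 n1). pose proof (A2 m2 n2).
      unfold M1, M2 in hd.
      destruct (sg_exists lam (i*m1 + S r*n1, i*m2 + S r*n2) s) as [mid smid].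
      { revert hd; generalize (dg lam); intros; dsolve. }
      transitivity mid.
      + apply (HS lam s (i*m1 + r*n1, i*m2 + r*n2)); auto.
        * unfold M1, M2; revert hd; generalize (dg lam); intros; dsolve.
        * replace (dadd (m1,m2) (i*m1 + r*n1, i*m2 + r*n2))
            with (S i*m1 + r*n1, S i*m2 + r*n2) by (unfold dadd; simpl; f_equal; lia).
          exact s1.
        * replace (dadd (n1,n2) (i*m1 + r*n1, i*m2 + r*n2))
            with (i*m1 + S r*n1, i*m2 + S r*n2) by (unfold dadd; simpl; f_equal; lia).
          exact smid.
      + apply (IH (S r)); auto. lia. }
  assert (HC : forall lam s nu nu', rg lam = v -> dle (dadd (a*b*M1, a*b*M2) s) (dg lam) ->
     sg lam (a*b*n1, a*b*n2) s nu -> sg lam (a*b*m1, a*b*m2) s nu' -> nu' = nu).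
  { intros lam s nu nu' hr hd s1 s2.
    apply (HCh lam s hr hd J 0); [lia| |].
    - replace (J*m1 + 0*n1, J*m2 + 0*n2) with (a*b*m1, a*b*m2) by (f_equal; unfold J; lia).
      exact s2.
    - replace (0*m1 + J*n1, 0*m2 + J*n2) with (a*b*n1, a*b*n2) by (f_equal; unfold J; lia).
      exact s1. }
  assert (lo : forall x, rg x = v -> sc x = v -> loop v x) by (intros; split; auto).
  assert (HQ := caseA v a b al1 al2 be2 ha hb (lo _ ra1 sa1) (lo _ ra2 sa2)
                (lo _ rb2 sb2) da1 da2 db2 n12 c21 c22).
  assert (HQB := caseB v a b al1 be1 be2 ha hb (lo _ ra1 sa1) (lo _ rb1 sb1)
                (lo _ rb2 sb2) da1 db1 db2 nb12).
  destruct (lt_eq_lt_dec n1 m1) as [[h|h]|h].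
  - apply (HQ n1 n2 m1 m2 M1 M2); unfold M1, M2; try lia.
    intros; symmetry; eapply HC; eauto.
  - subst m1.
    assert (hm2 : n2 <> m2) by (intro; subst; apply hmn; reflexivity).
    assert (E1 : M1 = n1) by (unfold M1; lia).
    rewrite E1 in HC.
    destruct (lt_eq_lt_dec n2 m2) as [[h|h]|h]; [|lia|].
    + apply (HQB n1 n2 m2 M2); unfold M2; try lia.
      intros; symmetry; eapply HC; eauto.
    + apply (HQB n1 m2 n2 M2); unfold M2; try lia.
      intros; eapply HC; eauto.
  - apply (HQ m1 m2 n1 n2 M1 M2); unfold M1, M2; try lia.
    intros; eapply HC; eauto.
Qed.

End Seg.

Lemma quartet_lift (L : twograph) (H : Obj L -> Prop) (hH : hereditary L H)
  (v : Obj (Gamma L H hH)) :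
  has_aperiodic_quartet L (proj1_sig v) -> has_aperiodic_quartet (Gamma L H hH) v.
Proof.
  destruct v as [v hv]; simpl.
  intros (a & b & ha & hb & al1 & al2 & be1 & be2 & Q).
  destruct Q as (n12 & nb12 & ra1 & sa1 & da1 & ra2 & sa2 & da2 & rb1 & sb1 & db1
                 & rb2 & sb2 & db2 & c21 & c22 & c11 & c12).
  assert (pf : forall x : Mor L, sc x = v -> ~ H (sc x)) by (intros x e; rewrite e; exact hv).
  set (A1 := exist (fun l => ~ H (sc l)) al1 (pf _ sa1) : Mor (Gamma L H hH)).
  set (A2 := exist (fun l => ~ H (sc l)) al2 (pf _ sa2) : Mor (Gamma L H hH)).
  set (B1 := exist (fun l => ~ H (sc l)) be1 (pf _ sb1) : Mor (Gamma L H hH)).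
  set (B2 := exist (fun l => ~ H (sc l)) be2 (pf _ sb2) : Mor (Gamma L H hH)).
  exists a, b. split; [exact ha|]. split; [exact hb|].
  exists A1, A2, B1, B2.
  assert (cmp : forall x y : Mor (Gamma L H hH), sc (proj1_sig x) = rg (proj1_sig y) ->
     proj1_sig (comp x y) = comp (proj1_sig x) (proj1_sig y)).
  { intros x y e. simpl. apply Gcomp_val. exact e. }
  unfold aperiodic_quartet.
  repeat split; simpl; try (apply sig_ext; simpl; assumption);
    try assumption.
  - intro e. apply n12. exact (f_equal (@proj1_sig _ _) e).
  - intro e. apply nb12. exact (f_equal (@proj1_sig _ _) e).
  - apply sig_ext. rewrite !Gcomp_val by (simpl; congruence). exact c21.
  - apply sig_ext. rewrite !Gcomp_val by (simpl; congruence). exact c22.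
  - apply sig_ext. rewrite !Gcomp_val by (simpl; congruence). exact c11.
  - apply sig_ext. rewrite !Gcomp_val by (simpl; congruence). exact c12.
Qed.

Theorem proposition3p9 (L : twograph) :
  row_finite L -> no_sources L ->
  (forall u : Obj L, has_aperiodic_quartet L u) ->
  strongly_aperiodic L.
Proof.
  intros _ _ hq H hH _ _ v.
  apply main_local. apply quartet_lift. apply hq.
Qed.
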